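(* Let $X\subset\mathbb{R}^n$ be amenable at $\bar x\in X$. Then $X$ is nearly convex at $\bar x$ (and hence nearly radial at $\bar x$).
   Context: The tangent cone is $T_X(x)=\{\lim t_r^{-1}(x_r-x):t_r\downarrow0,\ x_r\to x,\ x_r\in X\}$. $X$ is nearly convex at $\bar x$ if $\operatorname{dist}(y,x+T_X(x))=o(\|x-y\|)$ as $x,y\to\bar x$ in $X$. $X$ is nearly radial at $\bar x$ if $\operatorname{dist}(\bar x,x+T_X(x))=o(\|x-\bar x\|)$ as $x\to\bar x$ in $X$. $X$ is amenable at $\bar x$ if there exist an open neighbourhood $V$ of $\bar x$, a $C^1$ map $F:V\to\mathbb{R}^m$ and a closed convex set $D\subset\mathbb{R}^m$ with $X\cap V=\{x\in V:F(x)\in D\}$ and $N_D(F(\bar x))\cap\ker(\nabla F(\bar x)^* )=\{0\}$, where $N_D$ is the normal cone of convex analysis to $D$ and $\nabla F(\bar x)^*$ the adjoint of the Jacobian. *)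

(* Defs.v *)
From mathcomp Require Import all_boot.
From Stdlib Require Import Reals.
Open Scope R_scope.

Definition E (n : nat) : Type := 'I_n -> R.

Definition vadd {n} (x y : E n) : E n := fun i => x i + y i.
Definition vsub {n} (x y : E n) : E n := fun i => x i - y i.
Definition vscal {n} (c : R) (x : E n) : E n := fun i => c * x i.

Definition dot {n} (x y : E n) : R := \big[Rplus/0]_(i < n) (x i * y i).
Definition norm {n} (x : E n) : R := sqrt (dot x x).

Definition vconv {n} (u : nat -> E n) (l : E n) : Prop :=
  forall eps, 0 < eps -> exists N : nat, forall r : nat, (N <= r)%coq_nat ->
    norm (vsub (u r) l) < eps.
Definition rconv (u : nat -> R) (l : R) : Prop :=
  forall eps, 0 < eps -> exists N : nat, forall r : nat, (N <= r)%coq_nat ->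
    Rabs (u r - l) < eps.

Definition tangent_cone {n} (X : E n -> Prop) (x : E n) : E n -> Prop :=
  fun v => exists (t : nat -> R) (xs : nat -> E n),
    (forall r, 0 < t r) /\ rconv t 0 /\
    (forall r, X (xs r)) /\ vconv xs x /\
    vconv (fun r => vscal (/ t r) (vsub (xs r) x)) v.

(** dist(y, S) <= c, written out via the infimum defining dist. *)
Definition dist_le {n} (y : E n) (S : E n -> Prop) (c : R) : Prop :=
  forall eta, 0 < eta -> exists s, S s /\ norm (vsub y s) <= c + eta.

Definition translate {n} (x : E n) (T : E n -> Prop) : E n -> Prop :=
  fun z => exists v, T v /\ z = vadd x v.

Definition nearly_convex {n} (X : E n -> Prop) (xbar : E n) : Prop :=
  forall eps, 0 < eps -> exists delta, 0 < delta /\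
    forall x y, X x -> X y -> norm (vsub x xbar) < delta -> norm (vsub y xbar) < delta ->
      dist_le y (translate x (tangent_cone X x)) (eps * norm (vsub x y)).

Definition nearly_radial {n} (X : E n -> Prop) (xbar : E n) : Prop :=
  forall eps, 0 < eps -> exists delta, 0 < delta /\
    forall x, X x -> norm (vsub x xbar) < delta ->
      dist_le xbar (translate x (tangent_cone X x)) (eps * norm (vsub x xbar)).

Definition is_open {n} (V : E n -> Prop) : Prop :=
  forall x, V x -> exists r, 0 < r /\ forall y, norm (vsub y x) < r -> V y.
Definition is_closed {m} (D : E m -> Prop) : Prop :=
  forall (u : nat -> E m) (l : E m), (forall r, D (u r)) -> vconv u l -> D l.
Definition is_convex {m} (D : E m -> Prop) : Prop :=
  forall a b t, D a -> D b -> 0 <= t <= 1 ->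
    D (vadd (vscal t a) (vscal (1 - t) b)).

(** Normal cone of convex analysis (z assumed in D). *)
Definition normal_cone {m} (D : E m -> Prop) (z : E m) : E m -> Prop :=
  fun y => forall d, D d -> dot y (vsub d z) <= 0.

Definition mat (m n : nat) : Type := 'I_m -> 'I_n -> R.
Definition mat_apply {m n} (A : mat m n) (h : E n) : E m :=
  fun i => \big[Rplus/0]_(j < n) (A i j * h j).
Definition mat_adjoint_apply {m n} (A : mat m n) (y : E m) : E n :=
  fun j => \big[Rplus/0]_(i < m) (A i j * y i).

Definition C1_on_with {n m} (V : E n -> Prop) (F : E n -> E m) (J : E n -> mat m n) : Prop :=
  (forall x, V x -> forall eps, 0 < eps -> exists delta, 0 < delta /\
     forall y, norm (vsub y x) < delta ->
       norm (vsub (vsub (F y) (F x)) (mat_apply (J x) (vsub y x))) <= eps * norm (vsub y x)) /\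
  (forall x, V x -> forall i j eps, 0 < eps -> exists delta, 0 < delta /\
     forall y, V y -> norm (vsub y x) < delta -> Rabs (J y i j - J x i j) < eps).

Definition amenable {n} (X : E n -> Prop) (xbar : E n) : Prop :=
  exists (V : E n -> Prop) (m : nat) (F : E n -> E m) (J : E n -> mat m n) (D : E m -> Prop),
    is_open V /\ V xbar /\ C1_on_with V F J /\
    is_closed D /\ is_convex D /\
    (forall x, V x -> (X x <-> D (F x))) /\
    (forall y, normal_cone D (F xbar) y -> mat_adjoint_apply (J xbar) y = (fun _ => 0) ->
       y = (fun _ => 0)).

(* Main.v *)
Require Import Defs.
From HB Require Import structures.
From mathcomp Require Import all_boot.
From Stdlib Require Import Reals Lra Lia Classical ClassicalEpsilon FunctionalExtensionality.
Open Scope R_scope.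

HB.instance Definition _ := Monoid.isComLaw.Build R 0 Rplus (fun x y z => esym (Rplus_assoc x y z)) Rplus_comm Rplus_0_l.

Section Vec.
Variable n : nat.
Implicit Types x y z : E n.

Lemma sum_split (F G : 'I_n -> R) :
  \big[Rplus/0]_(i < n) (F i + G i) = \big[Rplus/0]_(i < n) F i + \big[Rplus/0]_(i < n) G i.
Proof. by rewrite big_split. Qed.

Lemma sum_scal (c : R) (F : 'I_n -> R) :
  \big[Rplus/0]_(i < n) (c * F i) = c * \big[Rplus/0]_(i < n) F i.
Proof.
apply: (big_rec2 (fun a b => a = c * b)); first by ring.
by move=> i a b _ ->; ring.
Qed.

Lemma sum_le (F G : 'I_n -> R) : (forall i, F i <= G i) ->
  \big[Rplus/0]_(i < n) F i <= \big[Rplus/0]_(i < n) G i.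
Proof.
move=> H; apply: (big_rec2 (fun a b => a <= b)); first lra.
by move=> i a b _ Hab; have := H i; lra.
Qed.

Lemma sum_nonneg (F : 'I_n -> R) : (forall i, 0 <= F i) -> 0 <= \big[Rplus/0]_(i < n) F i.
Proof.
move=> H; apply: (big_ind (fun a => 0 <= a)) => //; [lra | move=> a b; lra].
Qed.

Lemma sum_ge_term (F : 'I_n -> R) j : (forall i, 0 <= F i) -> F j <= \big[Rplus/0]_(i < n) F i.
Proof.
move=> H; rewrite (bigD1 j) //=.
match goal with |- _ <= _ + ?b => have : 0 <= b; [idtac|lra] end.
apply: (big_ind (fun a => 0 <= a)) => //; [lra | move=> a b; lra].
Qed.

Lemma sum_opp (F : 'I_n -> R) : \big[Rplus/0]_(i < n) (- F i) = - \big[Rplus/0]_(i < n) F i.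
Proof.
apply: (big_rec2 (fun a b => a = - b)); first by ring.
by move=> i a b _ ->; ring.
Qed.

Lemma dot_comm x y : dot x y = dot y x.
Proof. rewrite /dot; apply: eq_bigr => i _; ring. Qed.

Lemma dot_addl x y z : dot (vadd x y) z = dot x z + dot y z.
Proof. rewrite /dot -sum_split; apply: eq_bigr => i _; rewrite /vadd; ring. Qed.

Lemma dot_subl x y z : dot (vsub x y) z = dot x z - dot y z.
Proof.
rewrite /dot /Rminus -sum_opp -sum_split; apply: eq_bigr => i _; rewrite /vsub; ring.
Qed.

Lemma dot_scall c x y : dot (vscal c x) y = c * dot x y.
Proof. rewrite /dot -sum_scal; apply: eq_bigr => i _; rewrite /vscal; ring. Qed.

Lemma dot_addr x y z : dot z (vadd x y) = dot z x + dot z y.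
Proof. by rewrite dot_comm dot_addl !(dot_comm z). Qed.
Lemma dot_subr x y z : dot z (vsub x y) = dot z x - dot z y.
Proof. by rewrite dot_comm dot_subl !(dot_comm z). Qed.
Lemma dot_scalr c x y : dot y (vscal c x) = c * dot y x.
Proof. by rewrite dot_comm dot_scall dot_comm. Qed.

Lemma dot_pos x : 0 <= dot x x.
Proof. apply: sum_nonneg => i; nra. Qed.

Lemma norm_pos x : 0 <= norm x.
Proof. apply: sqrt_pos. Qed.

Lemma norm_sq x : norm x * norm x = dot x x.
Proof. apply: sqrt_sqrt; apply: dot_pos. Qed.

Lemma coord_le x i : Rabs (x i) <= norm x.
Proof.
rewrite /norm; rewrite -(sqrt_Rsqr (Rabs (x i))); last apply Rabs_pos.
apply: sqrt_le_1_alt. rewrite -Rsqr_abs /Rsqr.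
apply: (sum_ge_term (fun i => x i * x i)) => j; nra.
Qed.

Lemma CS x y : Rabs (dot x y) <= norm x * norm y.
Proof.
have Hq : forall t, 0 <= dot x x - 2 * t * dot x y + t * t * dot y y.
  move=> t; have := dot_pos (vsub x (vscal t y)).
  rewrite !dot_subl !dot_subr !dot_scall !dot_scalr (dot_comm y x); lra.
have Hx := dot_pos x; have Hy := dot_pos y.
have Hnx := norm_sq x; have Hny := norm_sq y.
have Px := norm_pos x; have Py := norm_pos y.
apply: Rsqr_incr_0_var; last nra.
rewrite Rsqr_mult -Rsqr_abs /Rsqr Hnx Hny.
case: (Req_dec (dot y y) 0) => Hy0.
  have : dot x y = 0.
    case: (Req_dec (dot x y) 0) => // Hne.
    have H := Hq ((dot x x + 1) / (2 * dot x y)).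
    have E2 : 2 * ((dot x x + 1) / (2 * dot x y)) * dot x y = dot x x + 1 by field.
    rewrite Hy0 E2 in H. lra.
  move=> ->; nra.
have := Hq (dot x y / dot y y).
have Hyp : 0 < dot y y by lra.
move=> H.
have E1 : dot x x - 2 * (dot x y / dot y y) * dot x y + dot x y / dot y y * (dot x y / dot y y) * dot y y
  = dot x x - dot x y * dot x y / dot y y by field; lra.
rewrite E1 in H.
have : dot x y * dot x y / dot y y <= dot x x by lra.
move=> H2. apply (Rmult_le_compat_r (dot y y)) in H2; last lra.
move: H2. have -> : dot x y * dot x y / dot y y * dot y y = dot x y * dot x y by field; lra.
lra.
Qed.

Lemma dot_le x y : dot x y <= norm x * norm y.
Proof. have := CS x y; have := Rle_abs (dot x y); lra. Qed.

Lemma norm_add x y : norm (vadd x y) <= norm x + norm y.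
Proof.
have P1 := norm_pos (vadd x y); have P2 := norm_pos x; have P3 := norm_pos y.
apply: Rsqr_incr_0_var; last lra.
rewrite /Rsqr norm_sq dot_addl !dot_addr -!norm_sq.
have := dot_le x y; have := dot_le y x. nra.
Qed.

Lemma norm_scal c x : norm (vscal c x) = Rabs c * norm x.
Proof.
rewrite /norm dot_scall dot_scalr -Rmult_assoc sqrt_mult_alt.
  rewrite (_ : c * c = Rsqr (Rabs c)); first by rewrite sqrt_Rsqr //; apply Rabs_pos.
  by rewrite -Rsqr_abs.
have := dot_pos x. nra.
Qed.

End Vec.


Ltac vext := apply: functional_extensionality => ?; rewrite /vadd /vsub /vscal /=; ring.

Definition Ksum n : R := \big[Rplus/0]_(i < n) 1.
Lemma Ksum_pos n : 0 <= Ksum n.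
Proof. apply: sum_nonneg => i; lra. Qed.

Lemma norm_coord_bound k (x : E k) c : 0 <= c -> (forall i, Rabs (x i) <= c) ->
  norm x <= c * sqrt (Ksum k).
Proof.
move=> Hc H; rewrite /norm -(sqrt_Rsqr c) // -sqrt_mult_alt; last by rewrite /Rsqr; nra.
apply: sqrt_le_1_alt; rewrite /Ksum -sum_scal; apply: sum_le => i.
have := H i; have := Rabs_pos (x i); rewrite /Rsqr Rmult_1_r => ??.
have -> : x i * x i = Rabs (x i) * Rabs (x i) by rewrite -Rabs_mult Rabs_right //; nra.
nra.
Qed.

Lemma max_nat_bound k (N : 'I_k -> nat) : exists M, forall i, (N i <= M)%coq_nat.
Proof. exists (\max_(i < k) N i) => i; apply/leP; apply: leq_bigmax. Qed.

Lemma coord_conv k (u : nat -> E k) l : (forall i, rconv (fun r => u r i) (l i)) -> vconv u l.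
Proof.
move=> H eps Heps.
set c := eps / (sqrt (Ksum k) + 1).
have HK := sqrt_pos (Ksum k).
have Hc : 0 < c by rewrite /c; apply: Rdiv_lt_0_compat; lra.
have HN : forall i, exists N, forall r, (N <= r)%coq_nat -> Rabs (u r i - l i) < c.
  by move=> i; apply: H.
have [Nf HNf] : exists Nf : 'I_k -> nat, forall i r, (Nf i <= r)%coq_nat -> Rabs (u r i - l i) < c.
  exists (fun i => proj1_sig (constructive_indefinite_description _ (HN i))).
  move=> i; exact: (proj2_sig (constructive_indefinite_description _ (HN i))).
have [M HM] := max_nat_bound _ Nf.
exists M => r Hr.
apply: Rle_lt_trans (norm_coord_bound _ (vsub (u r) l) c _ _) _; first lra.
  move=> i; rewrite /vsub; apply: Rlt_le; apply: HNf; have := HM i; lia.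
rewrite /c; apply: (Rmult_lt_reg_r (sqrt (Ksum k) + 1)); first lra.
field_simplify; lra.
Qed.

Definition incr (phi : nat -> nat) := forall r, (phi r < phi (S r))%coq_nat.
Lemma incr_ge phi : incr phi -> forall r, (r <= phi r)%coq_nat.
Proof. move=> H; elim=> [|r IH]; first lia. have := H r; lia. Qed.

Lemma incr_comp phi psi : incr phi -> incr psi -> incr (fun r => phi (psi r)).
Proof.
move=> Hp Hq r.
have mono : forall a b, (a < b)%coq_nat -> (phi a < phi b)%coq_nat.
  move=> a b Hab; elim: b Hab => [|b IH] Hab; first lia.
  have := Hp b; case: (Nat.eq_dec a b) => [->|Hne]; first lia.
  have := IH ltac:(lia); lia.
apply: mono; apply: Hq.
Qed.

Lemma rconv_sub (w : nat -> R) l phi : incr phi -> rconv w l -> rconv (fun r => w (phi r)) l.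
Proof.
move=> Hi H eps He; have [N HN] := H eps He; exists N => r Hr; apply: HN.
have := incr_ge _ Hi r; lia.
Qed.

Lemma vconv_sub k (w : nat -> E k) l phi : incr phi -> vconv w l -> vconv (fun r => w (phi r)) l.
Proof.
move=> Hi H eps He; have [N HN] := H eps He; exists N => r Hr; apply: HN.
have := incr_ge _ Hi r; lia.
Qed.

Lemma inv_small eps : 0 < eps -> exists N, forall r, (N <= r)%coq_nat -> / (INR r + 1) < eps.
Proof.
move=> He; have [N [HN HN0]] := archimed_cor1 eps He; exists N => r Hr.
apply: Rle_lt_trans HN.
have H1 : INR N <= INR r by apply: le_INR.
have H2 : 0 < INR N by apply: lt_0_INR.
apply: Rinv_le_contravar; lra.
Qed.

Lemma BW1 (v : nat -> R) B : (forall r, Rabs (v r) <= B) ->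
  exists psi, incr psi /\ exists l, rconv (fun r => v (psi r)) l.
Proof.
move=> HB.
have HB' : forall r, -B <= v r <= B.
  move=> r; have := HB r; rewrite /Rabs; case: Rcase_abs => ? ?; lra.
have [l Hl] := Bolzano_Weierstrass v (fun c => -B <= c <= B) (compact_P3 (-B) B) HB'.
have Hg : forall N k, exists p, (N <= p)%coq_nat /\ Rabs (v p - l) < / (INR k + 1).
  move=> N k.
  have Hpos : 0 < / (INR k + 1) by apply: Rinv_0_lt_compat; have := pos_INR k; lra.
  have [p [Hp1 Hp2]] := Hl (disc l (mkposreal _ Hpos)) N
    (ex_intro _ (mkposreal _ Hpos) (fun y H => H)).
  by exists p; split.
pose g N k := proj1_sig (constructive_indefinite_description _ (Hg N k)).
have Hgp : forall N k, (N <= g N k)%coq_nat /\ Rabs (v (g N k) - l) < / (INR k + 1).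
  move=> N k; exact: (proj2_sig (constructive_indefinite_description _ (Hg N k))).
pose psi := fix psi r := match r with O => g O O | S r' => g (S (psi r')) r end.
exists psi; split.
  by move=> r /=; have := (Hgp (S (psi r)) (S r)).1; lia.
exists l => eps He; have [N HN] := inv_small _ He; exists N => r Hr.
apply: Rlt_trans (HN r Hr).
case: r Hr => [|r] Hr /=; [exact: (Hgp O O).2 | exact: (Hgp _ _).2].
Qed.

Lemma BW k (u : nat -> E k) B : (forall r, norm (u r) <= B) ->
  exists phi, incr phi /\ exists l, vconv (fun r => u (phi r)) l.
Proof.
move=> HB.
have Haux : forall j, exists phi, incr phi /\
   forall i : 'I_k, (i < j)%coq_nat -> exists l, rconv (fun r => u (phi r) i) l.
  elim=> [|j [phi [Hphi IH]]].
    exists (fun r : nat => r); split; [by move=> r; lia | move=> i; lia].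
  case: (ltnP j k) => Hjk.
    pose i0 : 'I_k := Ordinal Hjk.
    have [psi [Hpsi [l0 Hl0]]] := BW1 (fun r => u (phi r) i0) B
      (fun r => Rle_trans _ _ _ (coord_le _ _ _) (HB _)).
    exists (fun r => phi (psi r)); split; first exact: incr_comp.
    move=> i Hi; case: (Nat.eq_dec i j) => Hij.
      have -> : i = i0 by apply: val_inj.
      by exists l0.
    have [l Hl] := IH i ltac:(lia); exists l.
    exact: (rconv_sub (fun r => u (phi r) i) l psi).
  exists phi; split => // i Hi; apply: IH; have := ltn_ord i; move/ltP => Hik; move/leP: Hjk => Hkj; lia.
have [phi [Hphi Hc]] := Haux k.
have Hc' : forall i : 'I_k, exists l, rconv (fun r => u (phi r) i) l.
  move=> i; apply: Hc; apply/ltP; exact: ltn_ord.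
exists phi; split => //.
exists (fun i => proj1_sig (constructive_indefinite_description _ (Hc' i))).
apply: coord_conv => i; exact: (proj2_sig (constructive_indefinite_description _ (Hc' i))).
Qed.

Lemma cauchy_conv k (u : nat -> E k) :
  (forall eps, 0 < eps -> exists N, forall p q, (N <= p)%coq_nat -> (N <= q)%coq_nat ->
     norm (vsub (u p) (u q)) < eps) -> exists l, vconv u l.
Proof.
move=> H.
have Hc : forall i, { l | Un_cv (fun r => u r i) l }.
  move=> i; apply: R_complete => eps He.
  have [N HN] := H eps He; exists N => p q Hp Hq.
  apply: Rle_lt_trans (HN p q Hp Hq); rewrite /Rdist; exact: (coord_le _ (vsub (u p) (u q)) i).
exists (fun i => proj1_sig (Hc i)); apply: coord_conv => i eps He.
have [N HN] := proj2_sig (Hc i) eps He; exists N => r Hr; exact: HN.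
Qed.


Lemma vsub_sym k (x y : E k) : norm (vsub x y) = norm (vsub y x).
Proof.
have -> : vsub x y = vscal (-1) (vsub y x) by vext.
by rewrite norm_scal Rabs_Ropp Rabs_R1 Rmult_1_l.
Qed.

Lemma norm_tri k (x y z : E k) : norm (vsub x z) <= norm (vsub x y) + norm (vsub y z).
Proof.
have -> : vsub x z = vadd (vsub x y) (vsub y z) by vext.
exact: norm_add.
Qed.

Lemma norm_zero k : norm (fun _ : 'I_k => 0) = 0.
Proof.
have -> : (fun _ : 'I_k => 0) = vscal 0 (fun _ => 0) by vext.
by rewrite norm_scal Rabs_R0 Rmult_0_l.
Qed.

Lemma vsub_same k (x : E k) : norm (vsub x x) = 0.
Proof. have -> : vsub x x = (fun _ => 0) by vext. exact: norm_zero. Qed.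

Lemma le_eps a b : (forall eps, 0 < eps -> a <= b + eps) -> a <= b.
Proof.
move=> H; case: (Rle_lt_dec a b) => // Hab.
have := H ((a - b) / 2) ltac:(lra); lra.
Qed.

Lemma lim_ball k (u : nat -> E k) v h c : vconv u v -> (forall r, norm (vsub (u r) h) <= c) ->
  norm (vsub v h) <= c.
Proof.
move=> Hu Hc; apply: le_eps => eps He.
have [N HN] := Hu eps He.
have := norm_tri _ v (u N) h; have := HN N (le_n N); rewrite vsub_sym.
have := Hc N; lra.
Qed.

Lemma norm_eq0 k (x : E k) : norm x = 0 -> x = (fun _ => 0).
Proof.
move=> H; apply: functional_extensionality => i.
have := coord_le _ x i; rewrite H => H2.
have := Rabs_pos (x i) => H3.
have : Rabs (x i) = 0 by lra.
by case: (Req_dec (x i) 0) => // Hn; have := Rabs_no_R0 _ Hn.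
Qed.

Lemma dot_expand k (u w : E k) t :
  dot (vsub u (vscal t w)) (vsub u (vscal t w)) = dot u u - 2 * t * dot u w + t * t * dot w w.
Proof. rewrite !dot_subl !dot_subr !dot_scall !dot_scalr (dot_comm _ w u); ring. Qed.

Lemma proj_exists m (D : E m -> Prop) (z d0 : E m) :
  is_closed D -> D d0 ->
  exists p, D p /\ forall d, D d -> norm (vsub z p) <= norm (vsub z d).
Proof.
move=> Hcl Hd0.
pose S := fun a => exists d, D d /\ a = - norm (vsub z d).
have Hb : bound S.
  exists 0 => a [d [_ ->]]; have := norm_pos _ (vsub z d); lra.
have [msup [Hub Hlub]] := completeness S Hb (ex_intro _ _ (ex_intro _ d0 (conj Hd0 erefl))).
have Hinf : forall d, D d -> - msup <= norm (vsub z d).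
  move=> d Hd; have := Hub _ (ex_intro _ d (conj Hd erefl)); lra.
have Happ : forall r : nat, exists d, D d /\ norm (vsub z d) < - msup + / (INR r + 1).
  move=> r; apply: NNPP => Hn.
  have Hpos : 0 < / (INR r + 1) by apply: Rinv_0_lt_compat; have := pos_INR r; lra.
  have : msup <= msup - / (INR r + 1).
    apply: Hlub => a [d [Hd ->]].
    case: (Rle_lt_dec (- norm (vsub z d)) (msup - / (INR r + 1))) => // Hlt.
    exfalso; apply: Hn; exists d; split => //; lra.
  lra.
pose ds r := proj1_sig (constructive_indefinite_description _ (Happ r)).
have Hds : forall r, D (ds r) /\ norm (vsub z (ds r)) < - msup + / (INR r + 1).
  move=> r; exact: (proj2_sig (constructive_indefinite_description _ (Happ r))).
have Hbd : forall r, norm (ds r) <= norm z + (- msup + 1).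
  move=> r.
  have -> : ds r = vsub z (vsub z (ds r)) by vext.
  have -> : vsub z (vsub z (ds r)) = vadd z (vscal (-1) (vsub z (ds r))) by vext.
  apply: Rle_trans (norm_add _ _ _) _.
  rewrite norm_scal Rabs_Ropp Rabs_R1 Rmult_1_l.
  have := (Hds r).2.
  have : / (INR r + 1) <= 1.
    rewrite -Rinv_1; apply: Rinv_le_contravar; first lra. have := pos_INR r; lra.
  lra.
have [phi [Hphi [p Hp]]] := BW _ ds _ Hbd.
exists p; split.
  by apply: (Hcl _ p _ Hp) => r; exact: (Hds _).1.
move=> d Hd; apply: Rle_trans (Hinf d Hd).
apply: le_eps => eps He.
have [N1 HN1] := Hp (eps / 2) ltac:(lra).
have [N2 HN2] := inv_small (eps / 2) ltac:(lra).
set r := Nat.max N1 N2.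
have := HN1 r ltac:(lia).
have := (Hds (phi r)).2.
have := HN2 (phi r) ltac:(have := incr_ge _ Hphi r; lia).
have := norm_tri _ z (ds (phi r)) p.
rewrite (vsub_sym _ (ds (phi r)) p). lra.
Qed.

Lemma proj_normal m (D : E m -> Prop) (z p : E m) :
  is_convex D -> D p -> (forall d, D d -> norm (vsub z p) <= norm (vsub z d)) ->
  forall d, D d -> dot (vsub z p) (vsub d p) <= 0.
Proof.
move=> Hcv Hp Hmin d Hd.
set a := dot (vsub z p) (vsub d p).
set b := dot (vsub d p) (vsub d p).
have Hb : 0 <= b := dot_pos _ (vsub d p).
have Ht : forall t, 0 < t <= 1 -> 2 * a <= t * b.
  move=> t Ht.
  have Hq := Hcv d p t Hd Hp ltac:(lra).
  have H1 := Hmin _ Hq.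
  have Hnn := norm_pos _ (vsub z p).
  have H2 : dot (vsub z p) (vsub z p) <=
            dot (vsub z (vadd (vscal t d) (vscal (1 - t) p))) (vsub z (vadd (vscal t d) (vscal (1 - t) p))).
    rewrite -!norm_sq; apply: Rmult_le_compat => //.
  have Heq : vsub z (vadd (vscal t d) (vscal (1 - t) p)) = vsub (vsub z p) (vscal t (vsub d p)) by vext.
  rewrite Heq in H2.
  move: H2; rewrite dot_expand -/a -/b.
  have : 0 < t by lra.
  move=> Htp H2.
  have : t * (2 * a) <= t * (t * b) by nra.
  move=> H3; apply: (Rmult_le_reg_l t) => //.
case: (Rle_lt_dec a 0) => // Ha.
set t := Rmin 1 (a / (b + 1)).
have Hab : 0 < a / (b + 1) by apply: Rdiv_lt_0_compat; lra.
have Ht1 : 0 < t <= 1 by rewrite /t; split; [apply: Rmin_glb_lt; lra | apply: Rmin_l].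
have := Ht t Ht1.
have : t * b <= a / (b + 1) * b.
  apply: Rmult_le_compat_r => //; apply: Rmin_r.
have : a / (b + 1) * b < a.
  have -> : a / (b + 1) * b = a * (b / (b + 1)) by field; lra.
  have : b / (b + 1) < 1 by apply: (Rmult_lt_reg_r (b + 1)); [lra | field_simplify; lra].
  nra.
lra.
Qed.


Definition Cmat (m n : nat) (M : R) := M * sqrt (Ksum n) * sqrt (Ksum m) + M * sqrt (Ksum m) * sqrt (Ksum n).

Lemma mat_apply_sub m n (A : mat m n) x y : mat_apply A (vsub x y) = vsub (mat_apply A x) (mat_apply A y).
Proof.
apply: functional_extensionality => i; rewrite /mat_apply /vsub /Rminus -sum_opp -sum_split.
apply: eq_bigr => j _; ring.
Qed.

Lemma mat_apply_scal m n (A : mat m n) c x : mat_apply A (vscal c x) = vscal c (mat_apply A x).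
Proof.
apply: functional_extensionality => i; rewrite /mat_apply /vscal -sum_scal.
apply: eq_bigr => j _; ring.
Qed.

Lemma adj_sub m n (A : mat m n) x y :
  mat_adjoint_apply A (vsub x y) = vsub (mat_adjoint_apply A x) (mat_adjoint_apply A y).
Proof.
apply: functional_extensionality => i; rewrite /mat_adjoint_apply /vsub /Rminus -sum_opp -sum_split.
apply: eq_bigr => j _; ring.
Qed.

Lemma adj_scal m n (A : mat m n) c x : mat_adjoint_apply A (vscal c x) = vscal c (mat_adjoint_apply A x).
Proof.
apply: functional_extensionality => i; rewrite /mat_adjoint_apply /vscal -sum_scal.
apply: eq_bigr => j _; ring.
Qed.

Lemma adj_dot m n (A : mat m n) (h : E n) (y : E m) :
  dot (mat_apply A h) y = dot h (mat_adjoint_apply A y).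
Proof.
rewrite /dot /mat_apply /mat_adjoint_apply.
have -> : \big[Rplus/0]_(i < m) (\big[Rplus/0]_(j < n) (A i j * h j) * y i)
   = \big[Rplus/0]_(i < m) \big[Rplus/0]_(j < n) (A i j * h j * y i).
  apply: eq_bigr => i _; rewrite Rmult_comm -sum_scal; apply: eq_bigr => j _; ring.
rewrite exchange_big /=; apply: eq_bigr => j _; rewrite -sum_scal; apply: eq_bigr => i _; ring.
Qed.

Definition matsub {m n} (A B : mat m n) : mat m n := fun i j => A i j - B i j.

Lemma matsub_apply m n (A B : mat m n) h :
  mat_apply (matsub A B) h = vsub (mat_apply A h) (mat_apply B h).
Proof.
apply: functional_extensionality => i; rewrite /mat_apply /vsub /matsub /Rminus -sum_opp -sum_split.
apply: eq_bigr => j _; ring.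
Qed.

Lemma matsub_adj m n (A B : mat m n) h :
  mat_adjoint_apply (matsub A B) h = vsub (mat_adjoint_apply A h) (mat_adjoint_apply B h).
Proof.
apply: functional_extensionality => i; rewrite /mat_adjoint_apply /vsub /matsub /Rminus -sum_opp -sum_split.
apply: eq_bigr => j _; ring.
Qed.

Lemma Cmat_pos m n M : 0 <= M -> 0 <= Cmat m n M.
Proof.
move=> HM; rewrite /Cmat; have := sqrt_pos (Ksum n); have := sqrt_pos (Ksum m).
move=> ??; apply: Rplus_le_le_0_compat; apply: Rmult_le_pos => //; apply: Rmult_le_pos => //.
Qed.

Lemma mat_bound m n (A : mat m n) M : 0 <= M -> (forall i j, Rabs (A i j) <= M) ->
  forall h, norm (mat_apply A h) <= Cmat m n M * norm h.
Proof.
move=> HM HA h.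
have Hn := norm_pos _ h; have Hsn := sqrt_pos (Ksum n); have Hsm := sqrt_pos (Ksum m).
have H1 : norm (mat_apply A h) <= M * sqrt (Ksum n) * norm h * sqrt (Ksum m).
  apply: norm_coord_bound; first by apply: Rmult_le_pos => //; apply: Rmult_le_pos.
  move=> i; rewrite /mat_apply (_ : \big[Rplus/0]_(j < n) (A i j * h j) = dot (A i) h) //.
  apply: Rle_trans (CS _ _ _) _; apply: Rmult_le_compat_r => //.
  by apply: norm_coord_bound.
rewrite /Cmat.
have : 0 <= M * sqrt (Ksum m) * sqrt (Ksum n) * norm h by repeat apply: Rmult_le_pos.
nra.
Qed.

Lemma adj_bound m n (A : mat m n) M : 0 <= M -> (forall i j, Rabs (A i j) <= M) ->
  forall y, norm (mat_adjoint_apply A y) <= Cmat m n M * norm y.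
Proof.
move=> HM HA y.
have Hn := norm_pos _ y; have Hsn := sqrt_pos (Ksum n); have Hsm := sqrt_pos (Ksum m).
have H1 : norm (mat_adjoint_apply A y) <= M * sqrt (Ksum m) * norm y * sqrt (Ksum n).
  apply: norm_coord_bound; first by apply: Rmult_le_pos => //; apply: Rmult_le_pos.
  move=> j; rewrite /mat_adjoint_apply (_ : \big[Rplus/0]_(i < m) (A i j * y i) = dot (fun i => A i j) y) //.
  apply: Rle_trans (CS _ _ _) _; apply: Rmult_le_compat_r => //.
  by apply: norm_coord_bound.
rewrite /Cmat.
have : 0 <= M * sqrt (Ksum n) * sqrt (Ksum m) * norm y by repeat apply: Rmult_le_pos.
nra.
Qed.


Lemma conv_ball k (x y c : E k) t : 0 <= t <= 1 ->
  norm (vsub (vadd x (vscal t (vsub y x))) c) <= (1 - t) * norm (vsub x c) + t * norm (vsub y c).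
Proof.
move=> Ht.
have -> : vsub (vadd x (vscal t (vsub y x))) c = vadd (vscal (1 - t) (vsub x c)) (vscal t (vsub y c)) by vext.
apply: Rle_trans (norm_add _ _ _) _; rewrite !norm_scal !Rabs_right; lra.
Qed.

Lemma sum2_ge m n (G : 'I_m -> 'I_n -> R) i j : (forall i j, 0 <= G i j) ->
  G i j <= \big[Rplus/0]_(i < m) \big[Rplus/0]_(j < n) G i j.
Proof.
move=> H; apply: Rle_trans (sum_ge_term _ (fun i => \big[Rplus/0]_(j < n) G i j) i _).
  exact: (sum_ge_term _ (G i)).
move=> i'; exact: sum_nonneg.
Qed.

Lemma fin_delta k m n (Q : 'I_m -> 'I_n -> E k -> Prop) x :
  (forall i j, exists d, 0 < d /\ forall y, norm (vsub y x) < d -> Q i j y) ->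
  exists d, 0 < d /\ forall y, norm (vsub y x) < d -> forall i j, Q i j y.
Proof.
move=> H.
have H' : forall p : 'I_m * 'I_n, exists d, 0 < d /\ forall y, norm (vsub y x) < d -> Q p.1 p.2 y.
  by case=> i j; apply: H.
pose dd p := proj1_sig (constructive_indefinite_description _ (H' p)).
have Hdd : forall p, 0 < dd p /\ forall y, norm (vsub y x) < dd p -> Q p.1 p.2 y.
  move=> p; exact: (proj2_sig (constructive_indefinite_description _ (H' p))).
set S := \big[Rplus/0]_(i < m) \big[Rplus/0]_(j < n) / dd (i, j).
have HS : forall i j, / dd (i, j) <= S.
  move=> i j; apply: (sum2_ge _ _ (fun i j => / dd (i, j))) => i' j'.
  by apply: Rlt_le; apply: Rinv_0_lt_compat; exact: (Hdd _).1.
have HS0 : 0 <= S.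
  apply: sum_nonneg => i; apply: sum_nonneg => j.
  by apply: Rlt_le; apply: Rinv_0_lt_compat; exact: (Hdd _).1.
exists (/ (S + 1)); split; first by apply: Rinv_0_lt_compat; lra.
move=> y Hy i j; apply: ((Hdd (i, j)).2 y).
apply: (Rlt_le_trans _ _ _ Hy).
have Hp := (Hdd (i, j)).1.
rewrite -(Rinv_inv (dd (i, j))); apply: Rinv_le_contravar.
  by apply: Rinv_0_lt_compat.
have := HS i j; lra.
Qed.

Lemma key_ineq c L N U W : 0 < c -> c <= L -> 0 <= N -> c * N <= U -> U <= L * N ->
  0 <= W -> W <= L * U ->
  N * N - 2 * (c * c / (L * L * L * L)) * (U * U) + (c * c / (L * L * L * L)) * (c * c / (L * L * L * L)) * (W * W)
  <= (1 - c * c * c * c / (L * L * L * L)) * (N * N).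
Proof.
move=> Hc HcL HN HU1 HU2 HW HW2.
have HL : 0 < L by lra.
set s := c * c / (L * L * L * L).
have HL4 : 0 < L * L * L * L by repeat apply: Rmult_lt_0_compat.
have Hs : 0 < s by rewrite /s; apply: Rdiv_lt_0_compat => //; apply: Rmult_lt_0_compat.
have HsL : s * (L * L) <= 1.
  rewrite /s; have -> : c * c / (L * L * L * L) * (L * L) = (c * c) / (L * L) by field; lra.
  apply: (Rmult_le_reg_r (L * L)); first nra.
  rewrite /Rdiv Rmult_assoc Rinv_l; nra.
have HU0 : 0 <= U by nra.
have H1 : W * W <= L * L * (U * U) by nra.
have H2 : s * s * (W * W) <= s * (U * U).
  have H4 : s * s * (W * W) <= s * (s * (L * L)) * (U * U).
    have -> : s * (s * (L * L)) * (U * U) = s * s * (L * L * (U * U)) by ring.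
    apply: Rmult_le_compat_l => //; nra.
  have HUU : 0 <= U * U by nra.
  have H5 : s * (s * (L * L)) <= s by nra.
  have := Rmult_le_compat_r _ _ _ HUU H5; lra.
have H3 : s * (c * c) * (N * N) <= s * (U * U).
  have -> : s * (c * c) * (N * N) = s * ((c * N) * (c * N)) by ring.
  apply: Rmult_le_compat_l; first lra.
  have : 0 <= c * N by nra.
  nra.
have -> : c * c * c * c / (L * L * L * L) = s * (c * c) by rewrite /s; field; lra.
nra.
Qed.

Lemma seg_ball k (x y c : E k) d t : norm (vsub x c) < d -> norm (vsub y c) < d -> 0 <= t <= 1 ->
  norm (vsub (vadd x (vscal t (vsub y x))) c) < d.
Proof.
move=> Hx Hy Ht; apply: Rle_lt_trans (conv_ball _ _ _ _ _ Ht) _.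
have : (1 - t) * norm (vsub x c) <= (1 - t) * d by apply: Rmult_le_compat_l; lra.
have := norm_pos _ (vsub x c); have := norm_pos _ (vsub y c).
case: (Req_dec t 0) => [->|Ht0]; first lra.
have : t * norm (vsub y c) < t * d by apply: Rmult_lt_compat_l; lra.
lra.
Qed.

Lemma pow_le_one q k : 0 <= q <= 1 -> q ^ k <= 1.
Proof. move=> Hq; rewrite -(pow1 k); exact: pow_incr. Qed.

Lemma sq_le a b : 0 <= b -> a * a <= b * b -> a <= b.
Proof. move=> Hb H; case: (Rle_lt_dec a b) => // Hab; nra. Qed.

Section Amen.
Variables (n m : nat) (X : E n -> Prop) (xbar : E n) (V : E n -> Prop)
  (F : E n -> E m) (J : E n -> mat m n) (D : E m -> Prop).
Hypotheses (HX : X xbar) (HV : is_open V) (HVx : V xbar) (HC1 : C1_on_with V F J)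
  (HDcl : is_closed D) (HDcv : is_convex D) (HXD : forall x, V x -> (X x <-> D (F x)))
  (HCQ : forall y, normal_cone D (F xbar) y -> mat_adjoint_apply (J xbar) y = (fun _ => 0) ->
       y = (fun _ => 0)).

Lemma DFx : D (F xbar).
Proof. by apply/HXD. Qed.

Lemma ballV : exists rV, 0 < rV /\ forall y, norm (vsub y xbar) < rV -> V y.
Proof. exact: HV. Qed.

Lemma Jcont x : V x -> forall eps, 0 < eps -> exists d, 0 < d /\
  forall y, norm (vsub y x) < d -> V y -> forall i j, Rabs (J y i j - J x i j) < eps.
Proof.
move=> Hx eps He.
have [d [Hd H]] := fin_delta _ _ _ (fun i j y => V y -> Rabs (J y i j - J x i j) < eps) x
  (fun i j => match HC1.2 x Hx i j eps He with ex_intro d (conj Hd Hy) =>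
     ex_intro _ d (conj Hd (fun y H1 H2 => Hy y H2 H1)) end).
exists d; split => // y Hy Hv i j; exact: H.
Qed.

Definition Mof (A : mat m n) := \big[Rplus/0]_(i < m) \big[Rplus/0]_(j < n) Rabs (A i j).
Lemma Mof_ge A i j : Rabs (A i j) <= Mof A.
Proof. apply: (sum2_ge _ _ (fun i j => Rabs (A i j))) => *; apply: Rabs_pos. Qed.
Lemma Mof_pos A : 0 <= Mof A.
Proof. apply: sum_nonneg => i; apply: sum_nonneg => j; apply: Rabs_pos. Qed.

Lemma Jbound : exists dJ M, 0 < dJ /\ 0 <= M /\
  forall y, norm (vsub y xbar) < dJ -> V y /\ forall i j, Rabs (J y i j) <= M.
Proof.
have [rV [HrV HVr]] := ballV.
have [d [Hd H]] := Jcont xbar HVx 1 ltac:(lra).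
exists (Rmin rV d), (Mof (J xbar) + 1); split; first by apply: Rmin_glb_lt.
split; first by have := Mof_pos (J xbar); lra.
move=> y Hy.
have Hy1 : norm (vsub y xbar) < rV by apply: Rlt_le_trans Hy (Rmin_l _ _).
have Hy2 : norm (vsub y xbar) < d by apply: Rlt_le_trans Hy (Rmin_r _ _).
split; first exact: HVr.
move=> i j; have := H y Hy2 (HVr y Hy1) i j; have := Mof_ge (J xbar) i j.
have := Rabs_triang_inv (J y i j) (J xbar i j); lra.
Qed.

Lemma F_split x y : vsub (F y) (F x) =
  vadd (vsub (vsub (F y) (F x)) (mat_apply (J x) (vsub y x))) (mat_apply (J x) (vsub y x)).
Proof. vext. Qed.

Lemma Fcont x : V x -> forall eps, 0 < eps -> exists d, 0 < d /\
  forall y, norm (vsub y x) < d -> norm (vsub (F y) (F x)) < eps.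
Proof.
move=> Hx eps He.
have [d [Hd H]] := HC1.1 x Hx 1 ltac:(lra).
set C := Cmat m n (Mof (J x)).
have HC : 0 <= C by apply: Cmat_pos; apply: Mof_pos.
exists (Rmin d (eps / (C + 2))); split.
  by apply: Rmin_glb_lt => //; apply: Rdiv_lt_0_compat; lra.
move=> y Hy.
have Hy1 : norm (vsub y x) < d by apply: Rlt_le_trans Hy (Rmin_l _ _).
have Hy2 : norm (vsub y x) < eps / (C + 2) by apply: Rlt_le_trans Hy (Rmin_r _ _).
rewrite F_split; apply: Rle_lt_trans (norm_add _ _ _) _.
have := H y Hy1.
have := mat_bound _ _ (J x) _ (Mof_pos _) (Mof_ge _) (vsub y x).
have := norm_pos _ (vsub y x).
have : norm (vsub y x) * (C + 2) < eps.
  by move: Hy2; rewrite /Rdiv => Hy2; apply: (Rmult_lt_reg_r (/ (C + 2))); [apply: Rinv_0_lt_compat; lra | rewrite Rmult_assoc Rinv_r; lra].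
rewrite -/C; nra.
Qed.

Lemma deriv_line x h s i : V (vadd x (vscal s h)) ->
  derivable_pt_lim (fun t => F (vadd x (vscal t h)) i) s
    (mat_apply (J (vadd x (vscal s h))) h i).
Proof.
set z := vadd x (vscal s h) => Hz eps He.
have Hh := norm_pos _ h.
have [d [Hd H]] := HC1.1 z Hz (eps / 2 / (norm h + 1)) ltac:(apply: Rdiv_lt_0_compat; lra).
have Hdel : 0 < d / (norm h + 1) by apply: Rdiv_lt_0_compat; lra.
exists (mkposreal _ Hdel) => t Ht Hta /=.
have Hw : vsub (vadd x (vscal (s + t) h)) z = vscal t h by rewrite /z; vext.
have Hnt : norm (vsub (vadd x (vscal (s + t) h)) z) = Rabs t * norm h by rewrite Hw norm_scal.
have Hsmall : norm (vsub (vadd x (vscal (s + t) h)) z) < d.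
  rewrite Hnt.
  have : Rabs t * (norm h + 1) < d.
    move: Hta => /= Hta; apply: (Rmult_lt_reg_r (/ (norm h + 1))); first by apply: Rinv_0_lt_compat; lra.
    by rewrite Rmult_assoc Rinv_r; lra.
  have := Rabs_pos t; nra.
have H1 := H _ Hsmall.
rewrite Hw mat_apply_scal norm_scal in H1.
have H2 : Rabs (F (vadd x (vscal (s + t) h)) i - F z i - t * mat_apply (J z) h i) <=
  eps / 2 / (norm h + 1) * (Rabs t * norm h) := Rle_trans _ _ _ (coord_le _ _ i) H1.
have Htp : 0 < Rabs t by apply: Rabs_pos_lt.
have -> : (F (vadd x (vscal (s + t) h)) i - F z i) / t - mat_apply (J z) h i
   = (F (vadd x (vscal (s + t) h)) i - F z i - t * mat_apply (J z) h i) / t by field.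
rewrite /Rdiv Rabs_mult Rabs_inv.
apply: (Rmult_lt_reg_r (Rabs t)) => //.
rewrite /Rdiv Rmult_assoc Rinv_l; last lra.
rewrite Rmult_1_r; apply: Rle_lt_trans H2 _.
have : eps / 2 / (norm h + 1) * norm h <= eps / 2.
  rewrite /Rdiv Rmult_assoc (Rmult_comm (/ (norm h + 1))) -Rmult_assoc.
  have : norm h * / (norm h + 1) <= 1.
    apply: (Rmult_le_reg_r (norm h + 1)); first lra.
    rewrite Rmult_assoc Rinv_l; lra.
  move=> H3; have : 0 < eps * / 2 by lra. nra.
nra.
Qed.

Lemma Cmat_lin M : Cmat m n M = M * Cmat m n 1.
Proof. rewrite /Cmat; ring. Qed.

Lemma USD eps : 0 < eps -> exists d, 0 < d /\ forall x y, norm (vsub x xbar) < d -> norm (vsub y xbar) < d ->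
  norm (vsub (vsub (F y) (F x)) (mat_apply (J x) (vsub y x))) <= eps * norm (vsub y x).
Proof.
move=> He.
have [rV [HrV HVr]] := ballV.
set K0 := Cmat m n 1 * sqrt (Ksum m).
have HK0 : 0 <= K0 by apply: Rmult_le_pos; [apply: Cmat_pos; lra | apply: sqrt_pos].
set eta := eps / (2 * (K0 + 1)).
have Heta : 0 < eta by apply: Rdiv_lt_0_compat; lra.
have [de [Hde Hc]] := Jcont xbar HVx eta Heta.
exists (Rmin rV de); split; first by apply: Rmin_glb_lt.
move=> x y Hx Hy.
set h := vsub y x.
have Hseg : forall t, 0 <= t <= 1 -> norm (vsub (vadd x (vscal t h)) xbar) < Rmin rV de.
  move=> t Ht; apply: Rle_lt_trans (conv_ball _ _ _ _ _ Ht) _.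
  have : (1 - t) * norm (vsub x xbar) <= (1 - t) * Rmin rV de by apply: Rmult_le_compat_l; lra.
  have : t * norm (vsub y xbar) <= t * Rmin rV de by apply: Rmult_le_compat_l; lra.
  have := norm_pos _ (vsub x xbar); have := norm_pos _ (vsub y xbar).
  case: (Req_dec t 0) => [->|Ht0]; first lra.
  have : t * norm (vsub y xbar) < t * Rmin rV de by apply: Rmult_lt_compat_l; lra.
  lra.
have HsegV : forall t, 0 <= t <= 1 -> V (vadd x (vscal t h)).
  move=> t Ht; apply: HVr; apply: Rlt_le_trans (Hseg t Ht) (Rmin_l _ _).
have Hsegd : forall t, 0 <= t <= 1 -> forall i j,
    Rabs (J (vadd x (vscal t h)) i j - J xbar i j) < eta.
  move=> t Ht; apply: Hc; [apply: Rlt_le_trans (Hseg t Ht) (Rmin_r _ _) | exact: HsegV].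
have Hx0 : vadd x (vscal 0 h) = x by rewrite /h; vext.
have Hy1 : vadd x (vscal 1 h) = y by rewrite /h; vext.
have Hh := norm_pos _ h.
have Hcoord : forall i, Rabs (vsub (vsub (F y) (F x)) (mat_apply (J x) h) i) <= Cmat m n (2 * eta) * norm h.
  move=> i.
  have [c [Hc1 Hc2]] := MVT_cor2 (fun t => F (vadd x (vscal t h)) i)
     (fun t => mat_apply (J (vadd x (vscal t h))) h i) 0 1 Rlt_0_1
     (fun t Ht => deriv_line x h t i (HsegV t Ht)).
  rewrite /= Hx0 Hy1 Rminus_0_r Rmult_1_r in Hc1.
  rewrite /vsub Hc1 -[mat_apply (J (vadd x (vscal c h))) h i - mat_apply (J x) h i]/(vsub _ _ i)
     -matsub_apply.
  apply: Rle_trans (coord_le _ _ i) _.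
  apply: mat_bound; first lra.
  move=> i' j'; rewrite /matsub.
  have := Hsegd c ltac:(lra) i' j'; have := Hsegd 0 ltac:(lra) i' j'; rewrite Hx0.
  move=> H1 H2.
  have -> : J (vadd x (vscal c h)) i' j' - J x i' j' =
    (J (vadd x (vscal c h)) i' j' - J xbar i' j') - (J x i' j' - J xbar i' j') by ring.
  apply: Rle_trans (Rabs_triang _ _) _; rewrite Rabs_Ropp; lra.
apply: Rle_trans (norm_coord_bound _ _ _ _ Hcoord) _.
  apply: Rmult_le_pos => //; apply: Cmat_pos; lra.
rewrite Cmat_lin.
have -> : 2 * eta * Cmat m n 1 * norm h * sqrt (Ksum m) = (2 * eta * K0) * norm h by rewrite /K0; ring.
apply: Rmult_le_compat_r => //.
rewrite /eta.
have -> : 2 * (eps / (2 * (K0 + 1))) * K0 = eps * (K0 / (K0 + 1)) by field; lra.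
have : K0 / (K0 + 1) <= 1.
  apply: (Rmult_le_reg_r (K0 + 1)); first lra.
  rewrite /Rdiv Rmult_assoc Rinv_l; lra.
nra.
Qed.

Lemma inv_pos (k : nat) : 0 < / (INR k + 1).
Proof. apply: Rinv_0_lt_compat; have := pos_INR k; lra. Qed.

Lemma UCQ : exists c dc, 0 < c /\ 0 < dc /\ forall z, norm (vsub z xbar) < dc ->
  forall p, D p -> norm (vsub p (F xbar)) < dc -> forall y, normal_cone D p y ->
  c * norm y <= norm (mat_adjoint_apply (J z) y).
Proof.
apply: NNPP => Hn.
have Hk : forall k : nat, exists zpy : E n * E m * E m,
   (norm (vsub (zpy.1).1 xbar) < / (INR k + 1)) /\ (D (zpy.1).2) /\
   (norm (vsub (zpy.1).2 (F xbar)) < / (INR k + 1)) /\ (normal_cone D (zpy.1).2 zpy.2) /\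
   (norm zpy.2 = 1) /\ (norm (mat_adjoint_apply (J (zpy.1).1) zpy.2) < / (INR k + 1)).
  move=> k; apply: NNPP => Hk; apply: Hn.
  exists (/ (INR k + 1)), (/ (INR k + 1)); split; first exact: inv_pos.
  split; first exact: inv_pos.
  move=> z Hz p Hp Hpf y Hy; apply: Rnot_lt_le => Hlt.
  have Hny := norm_pos _ y; have Hna := norm_pos _ (mat_adjoint_apply (J z) y).
  have Hik := inv_pos k.
  have Hy0 : 0 < norm y by nra.
  apply: Hk; exists (z, p, vscal (/ norm y) y) => /=.
  have Hiy : 0 < / norm y by apply: Rinv_0_lt_compat.
  split => //; split => //; split => //; split.
    move=> d Hd; rewrite dot_scall; have := Hy d Hd; nra.
  split; first by rewrite norm_scal Rabs_right; [field; lra | lra].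
  rewrite adj_scal norm_scal Rabs_right; last lra.
  apply: (Rmult_lt_reg_l (norm y)) => //.
  rewrite -Rmult_assoc Rinv_r; lra.
pose sq k := proj1_sig (constructive_indefinite_description _ (Hk k)).
have Hsq : forall k, _ := fun k => proj2_sig (constructive_indefinite_description _ (Hk k)).
pose zs k := ((sq k).1).1. pose ps k := ((sq k).1).2. pose ys k := (sq k).2.
have [phi [Hphi [w Hw]]] := BW _ ys 1 (fun k => Req_le _ _ (Hsq k).2.2.2.2.1).
have Hinvr : forall eps, 0 < eps -> exists N, forall r, (N <= r)%coq_nat -> / (INR (phi r) + 1) < eps.
  move=> eps He; have [N HN] := inv_small eps He; exists N => r Hr; apply: HN.
  have := incr_ge _ Hphi r; lia.
have Hw1 : 1 / 2 <= norm w.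
  have [N HN] := Hw (1 / 2) ltac:(lra).
  have H1 := HN N (le_n N).
  have H2 : norm (ys (phi N)) = 1 := (Hsq (phi N)).2.2.2.2.1.
  have H3 := norm_tri _ (ys (phi N)) w (fun _ => 0).
  have E1 : vsub (ys (phi N)) (fun _ => 0) = ys (phi N) by vext.
  have E2 : vsub w (fun _ => 0) = w by vext.
  rewrite E1 E2 in H3. lra.
have Hwn : normal_cone D (F xbar) w.
  move=> d Hd; apply: le_eps => eps He; rewrite Rplus_0_l.
  set Nd := norm (vsub d (F xbar)).
  have HNd : 0 <= Nd := norm_pos _ _.
  have [N1 HN1] := Hw (eps / 2 / (Nd + 1)) ltac:(apply: Rdiv_lt_0_compat; lra).
  have [N2 HN2] := Hinvr (eps / 2) ltac:(lra).
  set r := Nat.max N1 N2.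
  have H1 := HN1 r ltac:(lia). have H2 := HN2 r ltac:(lia).
  have [_ [_ [Hp [Hnc [Hn1 _]]]]] := Hsq (phi r).
  rewrite -/(ps (phi r)) -/(ys (phi r)) in Hp Hnc Hn1.
  have -> : dot w (vsub d (F xbar)) = dot (vsub w (ys (phi r))) (vsub d (F xbar)) +
      dot (ys (phi r)) (vsub d (ps (phi r))) + dot (ys (phi r)) (vsub (ps (phi r)) (F xbar)).
    rewrite !dot_subl !dot_subr; ring.
  have := Hnc d Hd.
  have := dot_le _ (vsub w (ys (phi r))) (vsub d (F xbar)).
  have := dot_le _ (ys (phi r)) (vsub (ps (phi r)) (F xbar)).
  rewrite Hn1 (vsub_sym _ w) -/Nd.
  have : norm (vsub (ys (phi r)) w) * Nd <= eps / 2.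
    have := norm_pos _ (vsub (ys (phi r)) w).
    have : eps / 2 / (Nd + 1) * Nd <= eps / 2.
      have -> : eps / 2 / (Nd + 1) * Nd = eps / 2 * (Nd / (Nd + 1)) by field; lra.
      have : Nd / (Nd + 1) <= 1.
        apply: (Rmult_le_reg_r (Nd + 1)); first lra.
        rewrite /Rdiv Rmult_assoc Rinv_l; lra.
      nra.
    move: H1; rewrite /ys; nra.
  lra.
have Hwa : mat_adjoint_apply (J xbar) w = (fun _ => 0).
  apply: norm_eq0; apply: Rle_antisym; last exact: norm_pos.
  apply: le_eps => eps He; rewrite Rplus_0_l.
  have [rV [HrV HVr]] := ballV.
  set C1 := Cmat m n 1.
  have HC1p : 0 <= C1 by apply: Cmat_pos; lra.
  set Mx := Mof (J xbar).
  set CM := Cmat m n Mx.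
  have HCM : 0 <= CM by apply: Cmat_pos; apply: Mof_pos.
  set eta := eps / 3 / (C1 + 1).
  have Heta : 0 < eta by apply: Rdiv_lt_0_compat; lra.
  have [de [Hde Hc]] := Jcont xbar HVx eta Heta.
  have [N1 HN1] := Hw (eps / 3 / (CM + 1)) ltac:(apply: Rdiv_lt_0_compat; lra).
  have [N2 HN2] := Hinvr (Rmin (eps / 3) (Rmin rV de)) ltac:(repeat apply: Rmin_glb_lt; lra).
  set r := Nat.max N1 N2.
  have H1 := HN1 r ltac:(lia). have H2 := HN2 r ltac:(lia).
  have [Hz [_ [_ [_ [Hn1 Ha]]]]] := Hsq (phi r).
  rewrite -/(zs (phi r)) -/(ys (phi r)) in Hz Hn1 Ha.
  have Hm1 := Rmin_l (eps / 3) (Rmin rV de).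
  have Hm2 := Rmin_r (eps / 3) (Rmin rV de).
  have Hm3 := Rmin_l rV de. have Hm4 := Rmin_r rV de.
  have Hzv : V (zs (phi r)) by apply: HVr; lra.
  have Hzd : norm (vsub (zs (phi r)) xbar) < de by lra.
  have -> : mat_adjoint_apply (J xbar) w = vadd (mat_adjoint_apply (J xbar) (vsub w (ys (phi r))))
     (vadd (mat_adjoint_apply (matsub (J xbar) (J (zs (phi r)))) (ys (phi r)))
           (mat_adjoint_apply (J (zs (phi r))) (ys (phi r)))).
    rewrite adj_sub matsub_adj; vext.
  apply: Rle_trans (norm_add _ _ _) _.
  apply: Rle_trans (Rplus_le_compat_l _ _ _ (norm_add _ _ _)) _.
  have B1 := adj_bound _ _ (J xbar) Mx (Mof_pos _) (Mof_ge _) (vsub w (ys (phi r))).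
  have B2 : norm (mat_adjoint_apply (matsub (J xbar) (J (zs (phi r)))) (ys (phi r))) <= Cmat m n eta * 1.
    rewrite -Hn1; apply: adj_bound; first lra.
    move=> i j; rewrite /matsub Rabs_minus_sym; apply: Rlt_le; exact: Hc.
  rewrite Cmat_lin -/C1 in B2.
  rewrite -/CM (vsub_sym _ w) in B1.
  have : CM * norm (vsub (ys (phi r)) w) <= eps / 3.
    have := norm_pos _ (vsub (ys (phi r)) w).
    have : eps / 3 / (CM + 1) * CM <= eps / 3.
      have -> : eps / 3 / (CM + 1) * CM = eps / 3 * (CM / (CM + 1)) by field; lra.
      have : CM / (CM + 1) <= 1.
        apply: (Rmult_le_reg_r (CM + 1)); first lra.
        rewrite /Rdiv Rmult_assoc Rinv_l; lra.
      nra.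
    move: H1; rewrite /ys; nra.
  have : eta * C1 * 1 <= eps / 3.
    rewrite /eta Rmult_1_r.
    have -> : eps / 3 / (C1 + 1) * C1 = eps / 3 * (C1 / (C1 + 1)) by field; lra.
    have : C1 / (C1 + 1) <= 1.
      apply: (Rmult_le_reg_r (C1 + 1)); first lra.
      rewrite /Rdiv Rmult_assoc Rinv_l; lra.
    nra.
  lra.
have := HCQ w Hwn Hwa => Hw0.
rewrite Hw0 norm_zero in Hw1; lra.
Qed.

Definition pr (w : E m) : E m :=
  proj1_sig (constructive_indefinite_description _ (proj_exists m D w (F xbar) HDcl DFx)).
Lemma pr_spec w : D (pr w) /\ forall d, D d -> norm (vsub w (pr w)) <= norm (vsub w d).
Proof. exact: (proj2_sig (constructive_indefinite_description _ (proj_exists m D w (F xbar) HDcl DFx))). Qed.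

Definition phi z := norm (vsub (F z) (pr (F z))).
Lemma phi_le z d : D d -> phi z <= norm (vsub (F z) d).
Proof. by move=> Hd; apply: (pr_spec (F z)).2. Qed.
Lemma phi_pos z : 0 <= phi z.
Proof. exact: norm_pos. Qed.

Definition step s z := vsub z (vscal s (mat_adjoint_apply (J z) (vsub (F z) (pr (F z))))).

Lemma ER : exists kappa d1, 0 < kappa /\ 0 < d1 /\ forall z, norm (vsub z xbar) < d1 ->
  exists w, X w /\ norm (vsub w z) <= kappa * phi z.
Proof.
have [c [dc [Hc [Hdc HUCQ]]]] := UCQ.
have [dJ [M [HdJ [HM HJb]]]] := Jbound.
set L := Cmat m n M + c.
have HCM : 0 <= Cmat m n M := Cmat_pos m n M HM.
have HcL : c <= L by rewrite /L; lra.
have HL : 0 < L by lra.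
have HL4 : 0 < L * L * L * L by repeat apply: Rmult_lt_0_compat.
set a := c * c * c * c / (L * L * L * L).
set s := c * c / (L * L * L * L).
have Ha : 0 < a by rewrite /a; apply: Rdiv_lt_0_compat => //; repeat apply: Rmult_lt_0_compat.
have Ha1 : a <= 1.
  rewrite /a; apply: (Rmult_le_reg_r (L * L * L * L)) => //.
  rewrite /Rdiv Rmult_assoc Rinv_l; last lra.
  rewrite Rmult_1_r Rmult_1_l.
  have H1 : c * c <= L * L by apply: Rmult_le_compat; lra.
  have H2 : 0 <= c * c by nra.
  have := Rmult_le_compat _ _ _ _ H2 H2 H1 H1. rewrite !Rmult_assoc; lra.
have Hs : 0 < s by rewrite /s; apply: Rdiv_lt_0_compat => //; nra.
set q := 1 - a / 4.
have Hq0 : 0 <= q by rewrite /q; lra.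
have Hq1 : q < 1 by rewrite /q; lra.
set eps1 := a / (4 * s * L).
have Heps1 : 0 < eps1 by rewrite /eps1; apply: Rdiv_lt_0_compat => //; nra.
have Heps1' : eps1 * s * L = a / 4 by rewrite /eps1; field; lra.
have [dU [HdU HUSD]] := USD eps1 Heps1.
have [rV [HrV HVr]] := ballV.
have [dF [HdF HFc]] := Fcont xbar HVx (dc / 2) ltac:(lra).
set rho := Rmin (Rmin dU dc) (Rmin (Rmin dJ rV) dF).
have Hrho : 0 < rho by rewrite /rho; repeat apply: Rmin_glb_lt.
have Hr1 : rho <= dU by rewrite /rho; apply: Rle_trans (Rmin_l _ _) (Rmin_l _ _).
have Hr2 : rho <= dc by rewrite /rho; apply: Rle_trans (Rmin_l _ _) (Rmin_r _ _).
have Hr3 : rho <= dJ by rewrite /rho; apply: Rle_trans (Rmin_r _ _) (Rle_trans _ _ _ (Rmin_l _ _) (Rmin_l _ _)).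
have Hr4 : rho <= rV by rewrite /rho; apply: Rle_trans (Rmin_r _ _) (Rle_trans _ _ _ (Rmin_l _ _) (Rmin_r _ _)).
have Hr5 : rho <= dF by rewrite /rho; apply: Rle_trans (Rmin_r _ _) (Rmin_r _ _).
set kappa := s * L / (1 - q).
have Hk : 0 < kappa by rewrite /kappa; apply: Rdiv_lt_0_compat; nra.
have HsL : s * L = kappa * (1 - q) by rewrite /kappa; field; lra.
have Hop : forall z, norm (vsub z xbar) < rho ->
    (forall h, norm (mat_apply (J z) h) <= L * norm h) /\
    (forall y, norm (mat_adjoint_apply (J z) y) <= L * norm y).
  move=> z Hz; have [_ Hb] := HJb z ltac:(lra).
  split => [h|y].
    have := mat_bound _ _ (J z) M HM Hb h; have := norm_pos _ h; rewrite /L; nra.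
  have := adj_bound _ _ (J z) M HM Hb y; have := norm_pos _ y; rewrite /L; nra.
have S1 : forall z, norm (vsub z xbar) < rho -> norm (vsub (step s z) z) <= s * L * phi z.
  move=> z Hz.
  have -> : vsub (step s z) z = vscal (- s) (mat_adjoint_apply (J z) (vsub (F z) (pr (F z)))).
    by rewrite /step; vext.
  rewrite norm_scal Rabs_Ropp Rabs_right; last lra.
  rewrite Rmult_assoc; apply: Rmult_le_compat_l; first lra.
  exact: (Hop z Hz).2.
have S2 : forall z, norm (vsub z xbar) < rho -> norm (vsub (step s z) xbar) < rho ->
    phi (step s z) <= q * phi z.
  move=> z Hz Hz'.
  set p := pr (F z).
  set nn := vsub (F z) p.
  set u := mat_adjoint_apply (J z) nn.
  set z' := step s z.
  have [Hp Hpmin] := pr_spec (F z).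
  rewrite -/p in Hp Hpmin.
  have Hnc : normal_cone D p nn := fun d Hd => proj_normal m D (F z) p HDcv Hp Hpmin d Hd.
  have Hpf : norm (vsub p (F xbar)) < dc.
    have H1 := Hpmin (F xbar) DFx.
    have H2 := norm_tri _ p (F z) (F xbar).
    have H3 := HFc z ltac:(lra).
    rewrite (vsub_sym _ p (F z)) in H2; lra.
  have HU1 : c * norm nn <= norm u := HUCQ z ltac:(lra) p Hp Hpf nn Hnc.
  have HU2 : norm u <= L * norm nn := (Hop z Hz).2 nn.
  have HW2 : norm (mat_apply (J z) u) <= L * norm u := (Hop z Hz).1 u.
  have Hdz : vsub z' z = vscal (- s) u by rewrite /z' /step -/p -/nn -/u; vext.
  have Hid : vsub (F z') p = vadd (vsub nn (vscal s (mat_apply (J z) u)))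
     (vsub (vsub (F z') (F z)) (mat_apply (J z) (vsub z' z))).
    rewrite Hdz mat_apply_scal /nn; vext.
  have He := HUSD z z' ltac:(lra) (Rlt_le_trans _ _ _ Hz' Hr1).
  have Hnz : norm (vsub z' z) = s * norm u by rewrite Hdz norm_scal Rabs_Ropp Rabs_right; lra.
  rewrite Hnz in He.
  have HN := norm_pos _ nn; have HUp := norm_pos _ u; have HWp := norm_pos _ (mat_apply (J z) u).
  have Hmain : norm (vsub nn (vscal s (mat_apply (J z) u))) <= (1 - a / 2) * norm nn.
    apply: sq_le; first nra.
    rewrite norm_sq dot_expand.
    rewrite (dot_comm _ nn) adj_dot -/u -!norm_sq.
    have K := key_ineq c L (norm nn) (norm u) (norm (mat_apply (J z) u)) Hc HcL HN HU1 HU2 HWp HW2.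
    rewrite -/s -/a in K.
    have : (1 - a) * (norm nn * norm nn) <= (1 - a / 2) * norm nn * ((1 - a / 2) * norm nn).
      have -> : (1 - a / 2) * norm nn * ((1 - a / 2) * norm nn) = (1 - a + a * a / 4) * (norm nn * norm nn) by field.
      apply: Rmult_le_compat_r; nra.
    lra.
  have Hfin : phi z' <= norm (vsub (F z') p) := phi_le z' p Hp.
  rewrite Hid in Hfin.
  have := norm_add _ (vsub nn (vscal s (mat_apply (J z) u))) (vsub (vsub (F z') (F z)) (mat_apply (J z) (vsub z' z))).
  change (phi z) with (norm nn).
  have : eps1 * (s * norm u) <= eps1 * s * L * norm nn.
    have -> : eps1 * s * L * norm nn = eps1 * (s * (L * norm nn)) by ring.
    apply: Rmult_le_compat_l; first lra.
    apply: Rmult_le_compat_l; lra.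
  rewrite Heps1' /q; lra.
have Fin : forall z0, norm (vsub z0 xbar) + kappa * phi z0 < rho ->
    exists w, X w /\ norm (vsub w z0) <= kappa * phi z0.
  move=> z0 Hz0.
  set phi0 := phi z0 in Hz0 *.
  have Hphi0 : 0 <= phi0 := phi_pos z0.
  pose zs k := iter k (step s) z0.
  have Hz0' : norm (vsub z0 xbar) < rho by have := Rmult_le_pos _ _ (Rlt_le _ _ Hk) Hphi0; lra.
  have Inv : forall k, norm (vsub (zs k) z0) <= kappa * phi0 * (1 - q ^ k) /\ phi (zs k) <= q ^ k * phi0.
    elim=> [|k [IH1 IH2]].
      rewrite /zs /= vsub_same; split; [lra | rewrite /phi0; lra].
    have Hqk : 0 <= q ^ k := pow_le q k Hq0.
    have Hqk1 : q ^ k <= 1 by apply: pow_le_one; lra.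
    have Hball : norm (vsub (zs k) xbar) < rho.
      have := norm_tri _ (zs k) z0 xbar.
      have : kappa * phi0 * (1 - q ^ k) <= kappa * phi0.
        have := Rmult_le_pos _ _ (Rlt_le _ _ Hk) Hphi0; nra.
      lra.
    have Hst := S1 (zs k) Hball.
    have Hzk1 : zs k.+1 = step s (zs k) by [].
    have Hd1 : norm (vsub (zs k.+1) z0) <= kappa * phi0 * (1 - q ^ k.+1).
      rewrite Hzk1; apply: Rle_trans (norm_tri _ _ (zs k) z0) _.
      have : s * L * phi (zs k) <= s * L * (q ^ k * phi0).
        apply: Rmult_le_compat_l => //; nra.
      rewrite HsL /= in Hst *; nra.
    split => //.
    have Hball1 : norm (vsub (zs k.+1) xbar) < rho.
      have := norm_tri _ (zs k.+1) z0 xbar.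
      have : kappa * phi0 * (1 - q ^ k.+1) <= kappa * phi0.
        have := pow_le q k.+1 Hq0; have := Rmult_le_pos _ _ (Rlt_le _ _ Hk) Hphi0; nra.
      lra.
    rewrite Hzk1 in Hball1 *.
    apply: Rle_trans (S2 _ Hball Hball1) _.
    rewrite /=; nra.
  have Cau : forall k j, norm (vsub (zs (k + j)%coq_nat) (zs k)) <= kappa * phi0 * (q ^ k - q ^ (k + j)%coq_nat).
    move=> k; elim=> [|j IH].
      rewrite Nat.add_0_r vsub_same; lra.
    rewrite Nat.add_succ_r.
    have [Hi1 Hi2] := Inv (k + j)%coq_nat.
    have Hball : norm (vsub (zs (k + j)%coq_nat) xbar) < rho.
      have := norm_tri _ (zs (k + j)%coq_nat) z0 xbar.
      have : kappa * phi0 * (1 - q ^ (k + j)%coq_nat) <= kappa * phi0.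
        have := pow_le q (k + j)%coq_nat Hq0; have := Rmult_le_pos _ _ (Rlt_le _ _ Hk) Hphi0; nra.
      lra.
    have Hst := S1 _ Hball.
    have Hzk1 : zs (k + j)%coq_nat.+1 = step s (zs (k + j)%coq_nat) by [].
    rewrite Hzk1; apply: Rle_trans (norm_tri _ _ (zs (k + j)%coq_nat) (zs k)) _.
    have : s * L * phi (zs (k + j)%coq_nat) <= s * L * (q ^ (k + j)%coq_nat * phi0).
      apply: Rmult_le_compat_l => //; nra.
    rewrite HsL /= in Hst *; nra.
  have Hcv : exists zst, vconv zs zst.
    apply: cauchy_conv => eps He.
    have [N HN] := pow_lt_1_zero q ltac:(rewrite Rabs_right; lra) (eps / (2 * (kappa * phi0 + 1)))
      ltac:(apply: Rdiv_lt_0_compat; nra).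
    exists N => p1 p2 Hp1 Hp2.
    have HqN := HN N (le_n N); rewrite Rabs_right in HqN; last by apply: Rle_ge; apply: pow_le.
    have Hb : forall p, (N <= p)%coq_nat -> norm (vsub (zs p) (zs N)) <= kappa * phi0 * q ^ N.
      move=> p Hp; have -> : p = Nat.add N (Nat.sub p N) by lia.
      apply: Rle_trans (Cau N (Nat.sub p N)) _.
      have := pow_le q (Nat.add N (Nat.sub p N)) Hq0; have := Rmult_le_pos _ _ (Rlt_le _ _ Hk) Hphi0; nra.
    have := norm_tri _ (zs p1) (zs N) (zs p2).
    rewrite (vsub_sym _ (zs N)).
    have := Hb p1 Hp1; have := Hb p2 Hp2.
    have : kappa * phi0 * q ^ N < eps / 2.
      have HkP : 0 <= kappa * phi0 := Rmult_le_pos _ _ (Rlt_le _ _ Hk) Hphi0.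
      have : (kappa * phi0) * q ^ N <= (kappa * phi0 + 1) * q ^ N.
        apply: Rmult_le_compat_r; [apply: pow_le | ]; lra.
      have : (kappa * phi0 + 1) * q ^ N < (kappa * phi0 + 1) * (eps / (2 * (kappa * phi0 + 1))).
        apply: Rmult_lt_compat_l; lra.
      have -> : (kappa * phi0 + 1) * (eps / (2 * (kappa * phi0 + 1))) = eps / 2 by field; lra.
      lra.
    lra.
  have [zst Hzst] := Hcv.
  have Hdist : norm (vsub zst z0) <= kappa * phi0.
    apply: (lim_ball _ zs) => // k.
    have [H1 _] := Inv k.
    have := pow_le q k Hq0; have := Rmult_le_pos _ _ (Rlt_le _ _ Hk) Hphi0; nra.
  have Hzb : norm (vsub zst xbar) < rho.
    have := norm_tri _ zst z0 xbar; lra.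
  have HVz : V zst by apply: HVr; lra.
  have Hphi : phi zst = 0.
    apply: Rle_antisym; last exact: phi_pos.
    apply: le_eps => eps He; rewrite Rplus_0_l.
    have [dd [Hdd HFz]] := Fcont zst HVz (eps / 2) ltac:(lra).
    have [N1 HN1] := Hzst dd Hdd.
    have [N2 HN2] := pow_lt_1_zero q ltac:(rewrite Rabs_right; lra) (eps / (2 * (phi0 + 1)))
      ltac:(apply: Rdiv_lt_0_compat; nra).
    set k := Nat.max N1 N2.
    have H1 := HFz (zs k) (HN1 k ltac:(lia)).
    have H2 := HN2 k ltac:(lia).
    rewrite Rabs_right in H2; last by apply: Rle_ge; apply: pow_le.
    have [_ H3] := Inv k.
    have [Hpk _] := pr_spec (F (zs k)).
    have H4 := phi_le zst _ Hpk.
    have H5 := norm_tri _ (F zst) (F (zs k)) (pr (F (zs k))).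
    rewrite (vsub_sym _ (F zst) (F (zs k))) in H5.
    have H6 : norm (vsub (F (zs k)) (pr (F (zs k)))) <= q ^ k * phi0 := H3.
    have : q ^ k * phi0 <= eps / 2.
      have : q ^ k * phi0 <= (eps / (2 * (phi0 + 1))) * phi0.
        apply: Rmult_le_compat_r; lra.
      have : eps / (2 * (phi0 + 1)) * phi0 <= eps / 2.
        have -> : eps / (2 * (phi0 + 1)) * phi0 = eps / 2 * (phi0 / (phi0 + 1)) by field; lra.
        have : phi0 / (phi0 + 1) <= 1.
          apply: (Rmult_le_reg_r (phi0 + 1)); first lra.
          rewrite /Rdiv Rmult_assoc Rinv_l; lra.
        nra.
      lra.
    lra.
  exists zst; split => //.
  apply/HXD => //.
  have Hpz := (pr_spec (F zst)).1.
  have : vsub (F zst) (pr (F zst)) = (fun _ => 0) by apply: norm_eq0.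
  move=> H0.
  have -> : F zst = pr (F zst).
    apply: functional_extensionality => i.
    have := f_equal (fun f => f i) H0; rewrite /vsub /=; lra.
  exact: Hpz.
have [dF2 [HdF2 HFc2]] := Fcont xbar HVx (rho / (2 * kappa)) ltac:(apply: Rdiv_lt_0_compat; lra).
exists kappa, (Rmin (rho / 2) dF2); split => //; split; first by apply: Rmin_glb_lt; lra.
move=> z Hz.
have Hz1 : norm (vsub z xbar) < rho / 2 by apply: Rlt_le_trans Hz (Rmin_l _ _).
have Hz2 : norm (vsub z xbar) < dF2 by apply: Rlt_le_trans Hz (Rmin_r _ _).
apply: Fin.
have H1 := phi_le z (F xbar) DFx.
have H2 := HFc2 z Hz2.
have : kappa * phi z < rho / 2.
  have : kappa * phi z <= kappa * norm (vsub (F z) (F xbar)) by apply: Rmult_le_compat_l; lra.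
  have : kappa * norm (vsub (F z) (F xbar)) < kappa * (rho / (2 * kappa)) by apply: Rmult_lt_compat_l.
  have -> : kappa * (rho / (2 * kappa)) = rho / 2 by field; lra.
  lra.
lra.
Qed.

Lemma NC : nearly_convex X xbar.
Proof.
move=> eps Heps.
have [kappa [d1 [Hk [Hd1 HER]]]] := ER.
set e' := eps / (2 * kappa).
have He' : 0 < e' by rewrite /e'; apply: Rdiv_lt_0_compat; lra.
have Hke : kappa * (2 * e') = eps by rewrite /e'; field; lra.
have [dU [HdU HUSD]] := USD e' He'.
have [rV [HrV HVr]] := ballV.
set dd := Rmin (Rmin d1 dU) rV.
have Hdd : 0 < dd by rewrite /dd; repeat apply: Rmin_glb_lt.
have Hdd1 : dd <= d1 by rewrite /dd; apply: Rle_trans (Rmin_l _ _) (Rmin_l _ _).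
have Hdd2 : dd <= dU by rewrite /dd; apply: Rle_trans (Rmin_l _ _) (Rmin_r _ _).
have Hdd3 : dd <= rV by rewrite /dd; apply: Rmin_r.
exists dd; split => // x y Hx Hy Hxb Hyb.
have HVx' : V x by apply: HVr; lra.
have HVy : V y by apply: HVr; lra.
have HDx : D (F x) := (HXD x HVx').1 Hx.
have HDy : D (F y) := (HXD y HVy).1 Hy.
set h := vsub y x.
have Hh := norm_pos _ h.
pose tt (r : nat) := / (INR r + 1).
have Htt : forall r, 0 < tt r <= 1.
  move=> r; split; first exact: inv_pos.
  rewrite /tt -Rinv_1; apply: Rinv_le_contravar; first lra. have := pos_INR r; lra.
pose z r := vadd x (vscal (tt r) h).
have Hzx : forall r, vsub (z r) x = vscal (tt r) h by move=> r; rewrite /z; vext.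
have Hzb : forall r, norm (vsub (z r) xbar) < dd.
  move=> r; apply: seg_ball => //; have := Htt r; lra.
have Hphi : forall r, phi (z r) <= 2 * e' * tt r * norm h.
  move=> r; have [Ht0 Ht1] := Htt r.
  have Hd := HDcv (F y) (F x) (tt r) HDy HDx ltac:(lra).
  apply: Rle_trans (phi_le _ _ Hd) _.
  have -> : vsub (F (z r)) (vadd (vscal (tt r) (F y)) (vscal (1 - tt r) (F x))) =
     vsub (vsub (vsub (F (z r)) (F x)) (mat_apply (J x) (vsub (z r) x)))
          (vscal (tt r) (vsub (vsub (F y) (F x)) (mat_apply (J x) h))).
    rewrite Hzx mat_apply_scal; vext.
  have := norm_tri _ (vsub (vsub (F (z r)) (F x)) (mat_apply (J x) (vsub (z r) x))) (fun _ => 0)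
     (vscal (tt r) (vsub (vsub (F y) (F x)) (mat_apply (J x) h))).
  have E1 : forall k (u : E k), vsub u (fun _ => 0) = u by move=> k u; vext.
  have E2 : forall k (u : E k), norm (vsub (fun _ => 0) u) = norm u.
    by move=> k u; rewrite vsub_sym E1.
  rewrite E1 E2 norm_scal Rabs_right; last lra.
  have H1 := HUSD x (z r) ltac:(lra) ltac:(have := Hzb r; lra).
  have H2 := HUSD x y ltac:(lra) ltac:(lra).
  have Hn : norm (vsub (z r) x) = tt r * norm h by rewrite Hzx norm_scal Rabs_right; lra.
  rewrite Hn in H1.
  rewrite -/h in H2.
  have : tt r * norm (vsub (vsub (F y) (F x)) (mat_apply (J x) h)) <= tt r * (e' * norm h).
    apply: Rmult_le_compat_l; lra.
  lra.
have Hw : forall r, exists w, X w /\ norm (vsub w (z r)) <= eps * tt r * norm h.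
  move=> r; have [w [Hw1 Hw2]] := HER (z r) ltac:(have := Hzb r; lra).
  exists w; split => //; apply: Rle_trans Hw2 _.
  have := Hphi r; have := Rmult_le_compat_l _ _ _ (Rlt_le _ _ Hk) (Hphi r).
  rewrite -Hke; lra.
pose ws r := proj1_sig (constructive_indefinite_description _ (Hw r)).
have Hws : forall r, X (ws r) /\ norm (vsub (ws r) (z r)) <= eps * tt r * norm h.
  move=> r; exact: (proj2_sig (constructive_indefinite_description _ (Hw r))).
pose g r := vscal (/ tt r) (vsub (ws r) x).
have Hgh : forall r, norm (vsub (g r) h) <= eps * norm h.
  move=> r; have [Ht0 _] := Htt r.
  have -> : vsub (g r) h = vscal (/ tt r) (vsub (ws r) (z r)).
    apply: functional_extensionality => i; rewrite /g /z /vsub /vscal /vadd; field; lra.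
  rewrite norm_scal Rabs_right; last by apply: Rle_ge; apply: Rlt_le; apply: Rinv_0_lt_compat.
  have := (Hws r).2.
  have Hi : 0 < / tt r by apply: Rinv_0_lt_compat.
  move=> H; have := Rmult_le_compat_l _ _ _ (Rlt_le _ _ Hi) H.
  have -> : / tt r * (eps * tt r * norm h) = eps * norm h by field; lra.
  done.
have Hgb : forall r, norm (g r) <= eps * norm h + norm h.
  move=> r; have -> : g r = vadd (vsub (g r) h) h by vext.
  apply: Rle_trans (norm_add _ _ _) _; have := Hgh r; lra.
have [psi [Hpsi [v Hv]]] := BW _ g _ Hgb.
have Hvh : norm (vsub v h) <= eps * norm h.
  exact: (lim_ball _ (fun r => g (psi r)) v h _ Hv (fun r => Hgh (psi r))).
have HT : tangent_cone X x v.
  exists (fun r => tt (psi r)), (fun r => ws (psi r)); split; first by move=> r; exact: (Htt _).1.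
  split.
    move=> e He; have [N HN] := inv_small e He; exists N => r Hr.
    rewrite Rminus_0_r Rabs_right; last by apply: Rle_ge; apply: Rlt_le; exact: (Htt _).1.
    apply: HN; have := incr_ge _ Hpsi r; lia.
  split; first by move=> r; exact: (Hws _).1.
  split; last exact: Hv.
  move=> e He.
  set B := eps * norm h + norm h.
  have HB : 0 <= B by rewrite /B; nra.
  have [N HN] := inv_small (e / (B + 1)) ltac:(apply: Rdiv_lt_0_compat; lra).
  exists N => r Hr.
  have Ht := Htt (psi r).
  have H1 : tt (psi r) < e * / (B + 1) := HN (psi r) ltac:(have := incr_ge _ Hpsi r; lia).
  have H2 := (Hws (psi r)).2.
  have H3 := norm_tri _ (ws (psi r)) (z (psi r)) x.
  rewrite Hzx norm_scal Rabs_right in H3; last lra.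
  have : tt (psi r) * B < e.
    have : tt (psi r) * (B + 1) < e.
      apply: (Rmult_lt_reg_r (/ (B + 1))); first by apply: Rinv_0_lt_compat; lra.
      by rewrite Rmult_assoc Rinv_r; lra.
    nra.
  move=> H4; rewrite /B in H4; nra.
move=> eta Heta; exists (vadd x v); split; first by exists v.
have -> : vsub y (vadd x v) = vsub h v by rewrite /h; vext.
rewrite vsub_sym (vsub_sym _ x y) -/h; lra.
Qed.

End Amen.

Theorem theorem8p2 (n : nat) (X : E n -> Prop) (xbar : E n) :
  X xbar -> amenable X xbar -> nearly_convex X xbar /\ nearly_radial X xbar.
Proof.
move=> HX [V [m [F [J [D [HV [HVx [HC1 [HDcl [HDcv [HXD HCQ]]]]]]]]]]].
have HNC : nearly_convex X xbar := NC n m X xbar V F J D HX HV HVx HC1 HDcl HDcv HXD HCQ.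
split => //.
move=> eps He; have [d [Hd H]] := HNC eps He; exists d; split => // x Hx Hxb.
by apply: H => //; rewrite vsub_same.
Qed.
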